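(* Let $\eta>0$ and $\theta>0$, and let $(\bar q(t))_{t\in\mathbb Z_+}$ be a sequence in $(0,1)$ such that $$\bar q(t+1)-\bar q(t)\le-\frac{\eta\,\bar q(t)^2}{\log\big(e-\log(\theta\bar q(t))\big)}\quad\text{for all }t,$$ and $\theta\bar q(0)\le1$. Then for every $T$ with $\eta T/\theta\ge1$, $$\bar q(T)\le\frac{1}{\eta T}\log\Big(e+\log\Big(\frac{\eta T}{\theta}\Big)\Big).$$ *)

(* Defs.v *)
From Stdlib Require Export Reals.
Open Scope R_scope.

(* Main.v *)
Require Import Defs.
From Stdlib Require Import Reals Lra Lia.
Open Scope R_scope.

Lemma ln_le (x y : R) : 0 < x -> x <= y -> ln x <= ln y.
Proof. intros H [h|h]; [left; apply ln_increasing; auto| subst; right; reflexivity]. Qed.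

Lemma Lge1 (x : R) : 0 < x <= 1 -> 1 <= ln (exp 1 - ln x).
Proof.
  intros [Hx H1].
  assert (ln x <= 0) by (rewrite <- ln_1; apply ln_le; lra).
  pose proof (exp_pos 1).
  rewrite <- (ln_exp 1) at 1. apply ln_le; lra.
Qed.

Theorem lemma22 (eta theta : R) (q : nat -> R)
  (Heta : 0 < eta) (Htheta : 0 < theta)
  (Hq : forall t : nat, 0 < q t < 1)
  (Hrec : forall t : nat,
     q (S t) - q t <= - (eta * (q t) ^ 2) / ln (exp 1 - ln (theta * q t)))
  (H0 : theta * q 0%nat <= 1) :
  forall T : nat, 1 <= eta * INR T / theta ->
    q T <= / (eta * INR T) * ln (exp 1 + ln (eta * INR T / theta)).
Proof.
  set (L := fun t => ln (exp 1 - ln (theta * q t))).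
  assert (Step : forall t, theta * q t <= 1 ->
            q (S t) <= q t /\ / q t + eta / L t <= / q (S t)).
  { intros t Ht.
    pose proof (Hq t) as [Hq1 Hq2]. pose proof (Hq (S t)) as [Hs1 Hs2].
    assert (HL : 1 <= L t).
    { unfold L. apply Lge1. split; [apply Rmult_lt_0_compat|]; lra. }
    pose proof (Hrec t) as Hr. fold (L t) in Hr.
    set (d := eta * q t ^ 2 / L t).
    assert (Hd : 0 <= d).
    { unfold d. apply Rmult_le_pos; [apply Rmult_le_pos; [lra| apply pow2_ge_0]|].
      left; apply Rinv_0_lt_compat; lra. }
    assert (Hr' : q (S t) <= q t - d) by (unfold d; unfold Rdiv in *; lra).
    split; [lra|].
    assert (Hed : eta / L t = d / (q t * q t)).
    { unfold d. field. split; lra. }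
    rewrite Hed.
    apply Rle_trans with (/ (q t - d)).
    - assert (0 < q t - d) by lra.
      assert (Hk: / q t + d / (q t * q t) = (q t + d) / (q t * q t)) by (field; lra).
      rewrite Hk.
      apply (Rmult_le_reg_r (q t * q t * (q t - d))).
      { apply Rmult_lt_0_compat; [apply Rmult_lt_0_compat|]; lra. }
      replace ((q t + d) / (q t * q t) * (q t * q t * (q t - d))) with ((q t + d) * (q t - d)) by (field; lra).
      replace (/ (q t - d) * (q t * q t * (q t - d))) with (q t * q t) by (field; lra).
      nra.
    - apply Rinv_le_contravar; lra. }
  assert (Hle1 : forall t, theta * q t <= 1).
  { induction t; [exact H0|].
    destruct (Step t IHt) as [A _]. pose proof (Hq t). nra. }
  assert (Mono : forall k t, q (k + t)%nat <= q t).
  { induction k; intros t; simpl; [lra|].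
    destruct (Step (k + t)%nat (Hle1 _)) as [A _]. specialize (IHk t). lra. }
  intros T HT.
  set (M := L T).
  assert (HM : 1 <= M).
  { unfold M, L. apply Lge1. split; [apply Rmult_lt_0_compat; [lra|apply Hq]|apply Hle1]. }
  assert (Main : forall t, (t <= T)%nat -> INR t * eta / M <= / q t).
  { induction t; intros Ht.
    - simpl. unfold Rdiv. rewrite !Rmult_0_l. left. apply Rinv_0_lt_compat. apply Hq.
    - assert (IH := IHt ltac:(lia)).
      destruct (Step t (Hle1 t)) as [_ B].
      assert (HLt : L t <= M).
      { unfold M, L. pose proof (Hq t). pose proof (Hq T).
        assert (q T <= q t).
        { replace T with ((T - t) + t)%nat by lia. apply Mono. }
        apply ln_le.
        - assert (ln (theta * q t) <= 0).
          { rewrite <- ln_1. apply ln_le; [apply Rmult_lt_0_compat; lra| apply Hle1]. }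
          pose proof (exp_pos 1). lra.
        - assert (ln (theta * q T) <= ln (theta * q t)).
          { apply ln_le; [apply Rmult_lt_0_compat; lra| nra]. }
          lra. }
      assert (HL1 : 1 <= L t).
      { unfold L. apply Lge1. split; [apply Rmult_lt_0_compat; [lra|apply Hq]|apply Hle1]. }
      assert (eta / M <= eta / L t).
      { unfold Rdiv. apply Rmult_le_compat_l; [lra|]. apply Rinv_le_contravar; lra. }
      rewrite S_INR.
      replace ((INR t + 1) * eta / M) with (INR t * eta / M + eta / M) by (field; lra).
      lra. }
  specialize (Main T (le_n T)).
  pose proof (Hq T) as [HqT1 HqT2].
  assert (HTpos : 0 < INR T).
  { destruct T. simpl in HT. unfold Rdiv in HT. rewrite Rmult_0_r, Rmult_0_l in HT. lra.
    apply lt_0_INR; lia. }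
  assert (HTe : 0 < eta * INR T) by (apply Rmult_lt_0_compat; lra).
  assert (Key : eta * INR T * q T <= M).
  { apply (Rmult_le_reg_r (/ q T)); [apply Rinv_0_lt_compat; lra|].
    replace (eta * INR T * q T * / q T) with (eta * INR T) by (field; lra).
    apply (Rmult_le_reg_r (/ M)); [apply Rinv_0_lt_compat; lra|].
    replace (eta * INR T * / M) with (INR T * eta / M) by (field; lra).
    replace (M * / q T * / M) with (/ q T) by (field; lra). exact Main. }
  set (Sx := eta * INR T / theta) in *.
  set (K := ln (exp 1 + ln Sx)).
  assert (HlnS : 0 <= ln Sx) by (rewrite <- ln_1; apply ln_le; lra).
  assert (HK : 1 <= K).
  { unfold K. rewrite <- (ln_exp 1) at 1. pose proof (exp_pos 1). apply ln_le; lra. }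
  assert (Fin : eta * INR T * q T <= K).
  { destruct (Rle_or_lt (eta * INR T * q T) K) as [h|h]; [exact h|exfalso].
    assert (Hprod : eta * INR T * q T = Sx * (theta * q T)) by (unfold Sx; field; lra).
    assert (Hx : 0 < theta * q T) by (apply Rmult_lt_0_compat; lra).
    assert (HSx : 0 < Sx) by lra.
    assert (Hln : 0 < ln Sx + ln (theta * q T)).
    { rewrite <- ln_mult by lra. rewrite <- ln_1. apply ln_increasing; lra. }
    assert (M < K).
    { unfold M, L, K. apply ln_increasing.
      - assert (ln (theta * q T) <= 0).
        { rewrite <- ln_1. apply ln_le; [lra| apply Hle1]. }
        pose proof (exp_pos 1). lra.
      - lra. }
    lra. }
  replace (q T) with (/ (eta * INR T) * (eta * INR T * q T)) at 1 by (field; lra).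
  apply Rmult_le_compat_l; [left; apply Rinv_0_lt_compat; lra| exact Fin].
Qed.
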